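(* Let $F$ be any field, $N\in\mathbb{N}$, and $p,p'\in\mathbb{N}$ with $p+p'\le N+1$. If $x\in F^{N+1}$ satisfies $\operatorname{rank}(H_{p-1,p'}(x))\le p'$, then $\operatorname{rank}(H_{p-1,p'}(x))\le \operatorname{rank}(H_{p,p'-1}(x))$.
   Context: $\mathbb{N}=\{0,1,2,\ldots\}$. For $N\in\mathbb{N}$, $x=(x_0,\ldots,x_N)\in F^{N+1}$ and integers $s,t\ge -1$ with $s+t\le N$, the Hankel matrix $H_{s,t}(x)$ is the $(s+1)\times(t+1)$ matrix $(x_{i+j})_{0\le i\le s,\,0\le j\le t}$ (a matrix with zero rows or columns has rank $0$). *)

(* Defs.v *)
From HB Require Import structures.
From mathcomp Require Import all_boot all_order all_algebra.
Set Implicit Arguments. Unset Strict Implicit. Unset Printing Implicit Defensive.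
Import GRing.Theory.
Local Open Scope ring_scope.

(* The paper's H_{s,t}(x) is [hankel x (s+1) (t+1)]
   (s,t >= -1, so s+1, t+1 are naturals; zero rows/cols give rank 0).
   Only used when m + n - 2 <= N, so [inord] never falls out of range. *)
Definition hankel (F : fieldType) (N : nat) (x : 'I_N.+1 -> F) (m n : nat)
  : 'M[F]_(m, n) :=
  \matrix_(i < m, j < n) x (inord (i + j)).

(* Main.v *)
Require Import Defs.
From mathcomp Require Import all_boot all_order all_algebra.
From mathcomp Require Import zify ring.
Set Implicit Arguments. Unset Strict Implicit. Unset Printing Implicit Defensive.
Import GRing.Theory.

Lemma hankel_tr (F : fieldType) (N : nat) (x : 'I_N.+1 -> F) m n :
  (hankel x m n)^T%R = hankel x n m.
Proof. by apply/matrixP => i j; rewrite !mxE addnC. Qed.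

Lemma hankel_rank_tr (F : fieldType) (N : nat) (x : 'I_N.+1 -> F) m n :
  \rank (hankel x m n) = \rank (hankel x n m).
Proof. by rewrite -mxrank_tr hankel_tr. Qed.

Lemma hankel_prefix (F : fieldType) (N : nat) (x : 'I_N.+1 -> F) m1 m2 n :
  (m1 <= m2)%N -> (hankel x m1 n <= hankel x m2 n)%MS.
Proof.
move=> le; apply/row_subP => i.
have -> : row i (hankel x m1 n) = row (widen_ord le i) (hankel x m2 n).
  by apply/rowP => j; rewrite !mxE.
exact: row_sub.
Qed.

Lemma hankel_rank_S (F : fieldType) (N : nat) (x : 'I_N.+1 -> F) m n :
  (\rank (hankel x m.+1 n) <= \rank (hankel x m n) + 1)%N.
Proof.
set r := row ord_max (hankel x m.+1 n).
have sub : (hankel x m.+1 n <= hankel x m n + r)%MS.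
  apply/row_subP => i.
  have [lt|ge] := ltnP i m.
    have -> : row i (hankel x m.+1 n) = row (Ordinal lt) (hankel x m n).
      by apply/rowP => j; rewrite !mxE.
    exact: (submx_trans (row_sub _ _) (addsmxSl _ _)).
  have -> : i = ord_max by apply/val_inj => /=; have := ltn_ord i; lia.
  exact: addsmxSr.
apply: (leq_trans (mxrankS sub)).
apply: (leq_trans (mxrank_adds_leqif _ _)).
by rewrite leq_add2l rank_leq_row.
Qed.

Lemma hankel_ker (F : fieldType) (N : nat) (x : 'I_N.+1 -> F) p p' :
  \rank (hankel x p' p) = \rank (hankel x p' p.+1) ->
  forall f : nat -> F,
  (forall i, (i < p)%N -> \sum_(j < p') f j * x (inord (j + i)) = 0)%R ->
  (forall i, (i < p.+1)%N -> \sum_(j < p') f j * x (inord (j + i)) = 0)%R.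
Proof.
move=> eqr f hf i ip.
set A1 := hankel x p' p; set Bt := hankel x p' p.+1.
have kk : (kermx Bt <= kermx A1)%MS.
  apply/sub_kermxP; apply/matrixP => a k.
  have := congr1 (fun M : 'M[F]_(p', p.+1) => M a (widen_ord (leqnSn p) k)) (mulmx_ker Bt).
  rewrite /A1 /Bt !mxE => e; rewrite -[X in _ = X]e; apply: eq_bigr => j _; rewrite !mxE //.
have kk2 : (kermx A1 <= kermx Bt)%MS.
  by rewrite -(mxrank_leqif_sup kk).2 !mxrank_ker eqr.
set u := (\row_(j < p') f j)%R.
have u0 : (u *m A1 = 0)%R.
  apply/rowP => k; rewrite /A1 !mxE -[RHS](hf k (ltn_ord k)).
  by apply: eq_bigr => j _; rewrite !mxE.
have : (u *m Bt = 0)%R.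
  by apply/sub_kermxP; apply: submx_trans kk2; apply/sub_kermxP.
move/rowP/(_ (Ordinal ip)); rewrite /Bt !mxE => e; rewrite -[X in _ = X]e.
by apply: eq_bigr => j _; rewrite !mxE.
Qed.

Definition kerA (F : fieldType) (N : nat) (x : 'I_N.+1 -> F) p p' (f : nat -> F) :=
  forall i, (i < p)%N -> (\sum_(j < p'.+1) f j * x (inord (j + i)) = 0)%R.

Lemma shift_step (F : fieldType) (N : nat) (x : 'I_N.+1 -> F) p p' :
  (forall f : nat -> F,
  (forall i, (i < p)%N -> \sum_(j < p') f j * x (inord (j + i)) = 0)%R ->
  (forall i, (i < p.+1)%N -> \sum_(j < p') f j * x (inord (j + i)) = 0)%R) ->
  forall f, kerA x p p' f -> f p' = 0%R ->
  kerA x p p' (fun j => if j is j'.+1 then f j' else 0%R).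
Proof.
move=> hK f hf fp i ip.
rewrite big_ord_recl /= mul0r add0r.
rewrite (eq_bigr (fun j : 'I_p' => f j * x (inord (j + i.+1)))%R); last first.
  by move=> j _; rewrite /bump add0n add1n addSnnS.
apply: hK => // k kp.
have := hf k kp; rewrite big_ord_recr /= fp mul0r addr0 => e; rewrite -[X in _ = X]e.
by [].
Qed.

Lemma shift_ind (F : fieldType) (N : nat) (x : 'I_N.+1 -> F) p p' :
  (forall f : nat -> F,
  (forall i, (i < p)%N -> \sum_(j < p') f j * x (inord (j + i)) = 0)%R ->
  (forall i, (i < p.+1)%N -> \sum_(j < p') f j * x (inord (j + i)) = 0)%R) ->
  forall d f, kerA x p p' f ->
  (exists j, (p' - d <= j <= p')%N /\ f j <> 0%R) ->
  exists g, kerA x p p' g /\ g p' <> 0%R.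
Proof.
move=> hK; elim=> [|d IH] f hf [j [hj fj]].
  have e : j = p' by lia.
  by rewrite e in fj; exists f; split.
have [fp|fp] := eqVneq (f p') 0%R; last by exists f; split => //; apply/eqP.
apply: (IH _ (shift_step hK hf fp)); exists j.+1; split => //.
have : j != p' by apply/eqP => e; apply: fj; rewrite e fp.
lia.
Qed.

Lemma last_row_sub (F : fieldType) (N : nat) (x : 'I_N.+1 -> F) p p' g :
  kerA x p p' g -> g p' <> 0%R ->
  (hankel x p'.+1 p <= hankel x p' p)%MS.
Proof.
move=> hg gp; have gp' : (g p' != 0)%R by apply/eqP.
apply/row_subP => i.
have [lt|ge] := ltnP i p'.
  have -> : row i (hankel x p'.+1 p) = row (Ordinal lt) (hankel x p' p).
    by apply/rowP => j; rewrite !mxE.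
  exact: row_sub.
have -> : i = ord_max by apply/val_inj => /=; have := ltn_ord i; lia.
have -> : row ord_max (hankel x p'.+1 p) =
   ((\row_(j < p') (- g j / g p')) *m hankel x p' p)%R.
  apply/rowP => k; rewrite !mxE.
  have := hg k (ltn_ord k); rewrite big_ord_recr /= => e0.
  set S := (\sum_(j < p') _)%R in e0.
  have eS : S = (- (g p' * x (inord (p' + k))))%R.
    by apply/eqP; rewrite -addr_eq0 e0.
  have -> : (\sum_j (\row_(j0 < p') (- g j0 / g p')) 0 j * hankel x p' p j k
      = - S / g p')%R.
    rewrite mulNr /S mulr_suml -sumrN; apply: eq_bigr => j _; rewrite !mxE.
    by field.
  by rewrite eS; field.
exact: submxMl.
Qed.

Theorem lemma7 (F : fieldType) (N p p' : nat) (x : 'I_N.+1 -> F) :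
  (p + p' <= N.+1)%N ->
  (\rank (hankel x p p'.+1) <= p')%N ->
  (\rank (hankel x p p'.+1) <= \rank (hankel x p.+1 p'))%N.
Proof.
move=> _; rewrite hankel_rank_tr => hr.
have ha : (\rank (hankel x p' p) <= \rank (hankel x p.+1 p'))%N.
  by rewrite hankel_rank_tr; apply: mxrankS; apply: hankel_prefix.
have hc := hankel_rank_S x p' p.
have [lt|ge] := ltnP (\rank (hankel x p' p)) (\rank (hankel x p.+1 p')).
  lia.
have eqr : \rank (hankel x p' p) = \rank (hankel x p' p.+1).
  rewrite [in RHS]hankel_rank_tr; apply/eqP; rewrite eqn_leq ha ge //.
have hK := hankel_ker eqr.
set Ah := hankel x p'.+1 p.
have knz : kermx Ah != 0%R.
  by rewrite -mxrank_eq0 mxrank_ker subn_eq0 -ltnNge ltnS.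
have : [exists a, [exists j, (kermx Ah a j != 0)%R]].
  case: (boolP [exists a, [exists j, (kermx Ah a j != 0)%R]]) => // /existsPn H.
  exfalso; move/negP: knz; apply; apply/eqP.
  apply/matrixP => a j; rewrite [RHS]mxE.
  by move: (H a) => /existsPn /(_ j) /negPn /eqP.
case/existsP => a /existsP [j nz].
set f := fun k : nat => kermx Ah a (inord k).
have kf : kerA x p p' f.
  move=> i ip.
  have := congr1 (fun M : 'M[F]_(p'.+1, p) => M a (Ordinal ip)) (mulmx_ker Ah).
  rewrite !mxE => e; rewrite -[X in _ = X]e; apply: eq_bigr => k _.
  by rewrite /f /Ah !mxE inord_val.
have [g [kg gp]] : exists g, kerA x p p' g /\ g p' <> 0%R.
  apply: (shift_ind hK (d := p') kf); exists j; split.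
    by have := ltn_ord j; lia.
  by rewrite /f inord_val; apply/eqP.
apply: leq_trans ha; apply: mxrankS; exact: last_row_sub kg gp.
Qed.
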